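(* Let $G$ be a finite graph having at least one sink-free orientation. Consider the algorithm: orient each edge of $G$ independently and uniformly at random; while there is at least one sink, re-orient independently and uniformly at random all edges incident to some sink (all sinks present at that moment simultaneously); output the current orientation. Let $Z_{\mathrm{sink},0}$ be the number of sink-free orientations of $G$ and $Z_{\mathrm{sink},1}$ the number of orientations of $G$ with exactly one sink. Then the expected total number of resampled sinks (summed over all rounds) is $\frac{Z_{\mathrm{sink},1}}{Z_{\mathrm{sink},0}}$.
   Context: An orientation assigns to each edge $\{u,v\}$ one of the directions $(u,v)$ or $(v,u)$. A sink is a vertex $v$ such that every edge incident to $v$ is directed towards $v$. A sink-free orientation is one with no sink. *)

(* Defs.v *)
From HB Require Import structures.
From mathcomp Require Import all_boot all_order all_algebra.
From mathcomp Require Import all_classical all_reals all_analysis.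
Set Implicit Arguments. Unset Strict Implicit. Unset Printing Implicit Defensive.
Import Order.TTheory GRing.Theory Num.Theory.
Local Open Scope ring_scope.

(* A finite (loopless multi)graph: vertex type V, edge type E, each edge i
   has two distinct endpoints src i and tgt i.  An orientation is a boolean
   per edge: true = directed (src i, tgt i), false = directed (tgt i, src i). *)

Definition head (V E : finType) (src tgt : E -> V) (s : {ffun E -> bool}) (i : E) : V :=
  if s i then tgt i else src i.

Definition incident (V E : finType) (src tgt : E -> V) (v : V) (i : E) : bool :=
  (src i == v) || (tgt i == v).

Definition is_sink (V E : finType) (src tgt : E -> V) (s : {ffun E -> bool}) (v : V) : bool :=
  [forall i, incident src tgt v i ==> (head src tgt s i == v)].

Definition sinks (V E : finType) (src tgt : E -> V) (s : {ffun E -> bool}) : {set V} :=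
  [set v | is_sink src tgt s v].

Definition resampled (V E : finType) (src tgt : E -> V) (s : {ffun E -> bool}) : {set E} :=
  [set i | [exists v in sinks src tgt s, incident src tgt v i]].

Definition Zsink (V E : finType) (src tgt : E -> V) (k : nat) : nat :=
  #|[set s : {ffun E -> bool} | #|sinks src tgt s| == k]|.

(* If there is
   no sink, nothing changes (the algorithm has stopped). *)
Definition step_kernel (R : realType) (V E : finType) (src tgt : E -> V)
    (s t : {ffun E -> bool}) : R :=
  if [forall i, (i \notin resampled src tgt s) ==> (t i == s i)]
  then (2 ^+ #|resampled src tgt s|)^-1 else 0.

Fixpoint dist (R : realType) (V E : finType) (src tgt : E -> V) (n : nat)
    : {ffun {ffun E -> bool} -> R} :=
  match n with
  | 0 => [ffun s => (2 ^+ #|E|)^-1]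
  | n'.+1 => [ffun t => \sum_(s : {ffun E -> bool})
                          dist R src tgt n' s * step_kernel R src tgt s t]
  end.

(* expected number of sinks resampled in round n (0 once no sink remains) *)
Definition expected_resampled_sinks (R : realType) (V E : finType) (src tgt : E -> V)
    (n : nat) : R :=
  \sum_(s : {ffun E -> bool}) dist R src tgt n s * (#|sinks src tgt s|)%:R.

(* Main.v *)
Require Import Defs.
From HB Require Import structures.
From mathcomp Require Import all_boot all_order all_algebra.
From mathcomp Require Import all_classical all_reals all_analysis.
From mathcomp Require Import ring lra.
Import Order.TTheory GRing.Theory Num.Theory.
Import numFieldNormedType.Exports.
Local Open Scope classical_set_scope.
Local Open Scope ring_scope.
Local Close Scope classical_set_scope.
Lemma card_agree (E : finType) (X : {set E}) (s : {ffun E -> bool}) :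
  #|[set t : {ffun E -> bool} | [forall i, (i \notin X) ==> (t i == s i)]]| = (2 ^ #|X|)%N.
Proof.
pose F (i : E) : pred bool := if i \in X then predT else pred1 (s i).
have := card_family F.
rewrite foldrE big_map big_enum /=.
have -> : \prod_i #|F i| = \prod_(i in X) 2.
  rewrite [RHS]big_mkcond /=; apply: eq_bigr => i _; rewrite /F; case: (i \in X).
    by rewrite cardT /= enumT unlock.
  by rewrite card1.
rewrite prod_nat_const => <-; apply: eq_card => t.
rewrite !inE; apply/forallP/forallP => H i; have := H i; rewrite /= /F;
  case: (i \in X) => //=; rewrite !inE //.
Qed.

Set Implicit Arguments. Unset Strict Implicit. Unset Printing Implicit Defensive.

Section SetLemmas.
Variables (R : realType) (V : finType).
Implicit Types (A B U : {set V}).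

Lemma sum_single B : \sum_(v : V) (B == [set v])%:R = (#|B| == 1%N)%:R :> R.
Proof.
case: (boolP (#|B| == 1%N)) => [/cards1P [w ->]|H].
  rewrite (bigD1 w) //= eqxx big1 ?addr0 // => v vw.
  case: eqP => // /set1_inj ew; by rewrite ew eqxx in vw.
rewrite big1 // => v _; case: eqP => // eB; by rewrite eB cards1 eqxx in H.
Qed.

Lemma sub_single A v : (v \in A) && (A \subset [set v]) = (A == [set v]).
Proof.
rewrite finset.eqEsubset finset.sub1set andbC.
by [].
Qed.

Lemma count_v A U :
  \sum_(v : V) ((v \in A) && (A :\ v \subset U) && (A :\ v != finset.set0))%:R =
  (A \subset U)%:R * #|A|%:R + (#|A :\: U| == 1%N)%:R - (#|A| == 1%N)%:R :> R.
Proof.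
set B := A :\: U.
have BA : B \subset A by apply: finset.subsetDl.
have split v : ((v \in A) && (A :\ v \subset U) && (A :\ v != finset.set0))%:R =
   (B == [set v])%:R + (B == finset.set0)%:R * (v \in A)%:R - (A == [set v])%:R :> R.
  have -> : (A :\ v \subset U) = (B \subset [set v]).
    by rewrite -!finset.setD_eq0 !finset.setDDl finset.setUC.
  rewrite finset.setD_eq0 finset.subset1 -(sub_single A v).
  have r1 : B == [set v] -> v \in A.
    by move/eqP=> eB; apply: (fintype.subsetP BA); rewrite eB finset.in_set1.
  have r2 : B == [set v] -> B != finset.set0.
    by move/eqP=> ->; apply/set0Pn; exists v; rewrite finset.in_set1.
  have r3 : A \subset [set v] -> (B == [set v]) || (B == finset.set0).
    by move=> sA; rewrite -finset.subset1; apply: fintype.subset_trans BA sA.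
  move: r1 r2 r3; case: (v \in A); case: (B == [set v]); case: (B == finset.set0);
    case: (A \subset [set v]) => //= r1 r2 r3;
    rewrite ?(mul0r,mul1r,mulr0,mulr1,addr0,add0r,subr0,subrr,sub0r) //;
    try (by have := r1 isT); try (by have := r2 isT); try (by have := r3 isT).
under eq_bigr => v _ do rewrite split.
rewrite sumrB big_split /= sum_single sum_single -mulr_sumr.
have -> : \sum_(i : V) (i \in A)%:R = #|A|%:R :> R.
  have -> : \sum_(i : V) (i \in A)%:R = \sum_(i in A) (1 : R).
    by rewrite [RHS]big_mkcond; apply: eq_bigr => i _; case: (i \in A).
  by rewrite sumr_const.
by rewrite [X in X - _]addrC /B finset.setD_eq0.
Qed.
End SetLemmas.

Section Comb.
Variable R : realType.
Variables (V E : finType) (src tgt : E -> V).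
Hypothesis loopless : forall i : E, src i != tgt i.
Local Notation Om := {ffun E -> bool}.
Local Notation S := (sinks src tgt).
Local Notation hd := (Defs.head src tgt).
Local Notation inc := (incident src tgt).

Lemma head_eq (s s' : Om) i : s i = s' i -> hd s i = hd s' i.
Proof. by rewrite /Defs.head => ->. Qed.

Lemma head_inj (s s' : Om) i : hd s i = hd s' i -> s i = s' i.
Proof.
rewrite /Defs.head; case: (s i); case: (s' i) => // /eqP; rewrite ?(negbTE (loopless i)) //.
by rewrite eq_sym (negbTE (loopless i)).
Qed.

Lemma inc_head (s : Om) i : inc (hd s i) i.
Proof. by rewrite /incident /Defs.head; case: (s i); rewrite eqxx ?orbT. Qed.

Lemma in_sinks (s : Om) v : (v \in S s) = [forall i, inc v i ==> (hd s i == v)].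
Proof. by rewrite inE. Qed.

Lemma sinkP (s : Om) v : reflect (forall i, inc v i -> hd s i = v) (v \in S s).
Proof.
rewrite in_sinks; apply: (iffP forallP) => [H i Hi|H i].
  by have /implyP/(_ Hi)/eqP := H i.
by apply/implyP => /H ->.
Qed.

Definition Xs (T : {set V}) : {set E} := [set i | [exists v in T, inc v i]].
Definition Us (T : {set V}) : {set V} := [set w | [exists i in Xs T, inc w i]].
Definition phi (s0 : Om) (T : {set V}) (t : Om) : Om :=
  [ffun i => if i \in Xs T then s0 i else t i].

Lemma resampledE (s : Om) : resampled src tgt s = Xs (S s).
Proof. by []. Qed.

Lemma XsP (T : {set V}) i : reflect (exists2 v, v \in T & inc v i) (i \in Xs T).
Proof. by rewrite inE; apply: (iffP exists_inP) => [[v]|[v]]; exists v. Qed.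

Lemma UsP (T : {set V}) w : reflect (exists2 i, i \in Xs T & inc w i) (w \in Us T).
Proof. by rewrite inE; apply: (iffP exists_inP) => [[v]|[v]]; exists v. Qed.

Lemma forced (T : {set V}) (s s' : Om) i : T \subset S s -> T \subset S s' -> i \in Xs T -> s i = s' i.
Proof.
move=> /fintype.subsetP H /fintype.subsetP H' /XsP [v vT vi]; apply: head_inj.
by rewrite (sinkP _ _ (H v vT) i vi) (sinkP _ _ (H' v vT) i vi).
Qed.

Lemma phi_sinks (s0 t : Om) (T : {set V}) w : T \subset S s0 ->
  (w \in S (phi s0 T t)) = (w \in T) || ((w \in S t) && (w \notin Us T)).
Proof.
move=> /fintype.subsetP sT.
have [wT|wT] /= := boolP (w \in T).
  apply/sinkP => i wi; have iX : i \in Xs T by apply/XsP; exists w.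
  rewrite (@head_eq _ s0); first exact: (sinkP _ _ (sT w wT)).
  by rewrite ffunE iX.
have [wU|wU] /= := boolP (w \in Us T).
  rewrite andbF; apply/negbTE/negP => /sinkP Hs.
  case/UsP: wU => i iX wi; have := Hs i wi.
  rewrite (@head_eq _ s0); last by rewrite ffunE iX.
  case/XsP: iX => v vT vi; rewrite (sinkP _ _ (sT v vT) i vi) => ev.
  by rewrite -ev vT in wT.
have agree i : inc w i -> phi s0 T t i = t i.
  move=> wi; rewrite ffunE; case: ifP => // iX; case/negP: wU; apply/UsP; exists i => //.
rewrite andbT; apply/sinkP/sinkP => H i wi; rewrite -(H i wi); apply: head_eq;
  by rewrite agree.
Qed.


Lemma sumr_ind (P : pred Om) : \sum_(t : Om) (P t)%:R = #|[set t | P t]|%:R :> R.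
Proof.
have -> : \sum_(t : Om) (P t)%:R = \sum_(t | P t) (1 : R).
  by rewrite [RHS]big_mkcond; apply: eq_bigr => t _; case: (P t).
by rewrite sumr_const; congr (_ *+ _); apply: eq_card => t; rewrite !inE.
Qed.

Lemma card_phi s0 (T : {set V}) (s' : Om) :
  #|[set t | phi s0 T t == s']| =
  if [forall i in Xs T, s' i == s0 i] then (2 ^ #|Xs T|)%N else 0%N.
Proof.
case: ifP => H.
  rewrite -(@card_agree _ (Xs T) s'); apply: eq_card => t; rewrite !inE.
  apply/eqP/forallP => [<- i|Hi]; first by apply/implyP => iX; rewrite ffunE (negbTE iX).
  apply/ffunP => i; rewrite ffunE; case: ifP => iX.
    by have /forall_inP/(_ i iX)/eqP := H.
  by have /implyP := Hi i; rewrite iX => /(_ isT)/eqP.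
apply/eqP; rewrite cards_eq0; apply/eqP/setP => t; rewrite !inE.
apply/negP => /eqP Et; move/negP: H; apply; apply/forall_inP => i iX.
by rewrite -Et ffunE iX.
Qed.

Lemma sum_phi s0 (T : {set V}) (Q : Om -> R) :
  \sum_t Q (phi s0 T t) =
  (2 ^ #|Xs T|)%:R * \sum_(s' : Om | [forall i in Xs T, s' i == s0 i]) Q s'.
Proof.
transitivity (\sum_(t : Om) \sum_(s' : Om) (phi s0 T t == s')%:R * Q s').
  apply: eq_bigr => t _; rewrite (bigD1 (phi s0 T t)) //= eqxx mul1r big1 ?addr0 //.
  by move=> s' /negbTE; rewrite eq_sym => ->; rewrite mul0r.
rewrite exchange_big /= mulr_sumr [RHS]big_mkcond; apply: eq_bigr => s' _.
rewrite -mulr_suml sumr_ind card_phi; case: ifP => _ //.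
by rewrite !mul0r.
Qed.

Lemma agree_sub s0 (T : {set V}) (s' : Om) : T \subset S s0 ->
  [forall i in Xs T, s' i == s0 i] = (T \subset S s').
Proof.
move=> sT; apply/forall_inP/fintype.subsetP => [H w wT|H i iX].
  apply/sinkP => i wi; have iX : i \in Xs T by apply/XsP; exists w.
  rewrite (@head_eq _ s0); last by apply/eqP/H.
  by apply: (sinkP _ _ (fintype.subsetP sT w wT)).
by apply/eqP; apply: (@forced T) => //; apply/fintype.subsetP.
Qed.

Lemma sinks_phi s0 (T : {set V}) t : T \subset S s0 ->
  S (phi s0 T t) = T :|: (S t :\: Us T).
Proof. by move=> sT; apply/setP => w; rewrite phi_sinks // !inE andbC. Qed.

Hypothesis noiso : forall w : V, exists i, inc w i.

Lemma sub_Us (T : {set V}) : T \subset Us T.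
Proof.
apply/fintype.subsetP => w wT; have [i wi] := noiso w.
by apply/UsP; exists i => //; apply/XsP; exists w.
Qed.

Lemma sinks_phi_eq s0 (T : {set V}) t : T \subset S s0 ->
  (S (phi s0 T t) == T) = (S t \subset Us T).
Proof.
move=> sT; rewrite sinks_phi //; apply/eqP/idP => [H|H].
  apply/fintype.subsetP => w wt; apply/negPn/negP => wU.
  have : w \in T :|: (S t :\: Us T) by rewrite finset.in_setU finset.in_setD wt wU orbT.
  by rewrite H => /(fintype.subsetP (sub_Us T)); rewrite (negbTE wU).
apply/setP => w; rewrite finset.in_setU finset.in_setD; case: (w \in T) => //=.
apply/negbTE; rewrite negb_and negbK; case: (boolP (w \in S t)) => //= wS.
  by rewrite (fintype.subsetP H w wS).
by rewrite orbT.
Qed.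

Lemma card_sinks_phi s0 (T : {set V}) t : T \subset S s0 ->
  #|S (phi s0 T t)| = (#|T| + #|S t :\: Us T|)%N.
Proof.
move=> sT; rewrite sinks_phi // cardsU; suff -> : T :&: (S t :\: Us T) = finset.set0 by rewrite cards0 subn0.
apply/setP => w; rewrite finset.in_setI finset.in_setD finset.in_set0.
case wT : (w \in T) => //=.
by rewrite (fintype.subsetP (sub_Us T) w wT).

Qed.

Definition cnt (T : {set V}) : nat := #|[set s : Om | S s == T]|.
Definition Gc (T : {set V}) : nat :=
  #|[set s : Om | (T \subset S s) && (#|S s| == #|T|.+1)]|.

Lemma sum_C s0 (T : {set V}) : T \subset S s0 ->
  \sum_(t : Om) (S t \subset Us T)%:R = (2 ^ #|Xs T|)%:R * (cnt T)%:R :> R.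
Proof.
move=> sT; under eq_bigr => t _ do rewrite -(sinks_phi_eq t sT).
rewrite (sum_phi s0 T (fun s => (S s == T)%:R)) /cnt -sumr_ind; congr (_ * _).
rewrite big_mkcond; apply: eq_bigr => s' _; rewrite agree_sub //.
by case: (boolP (S s' == T)) => [/eqP ->|]; rewrite ?subxx // if_same.
Qed.

Lemma sum_E s0 (T : {set V}) : T \subset S s0 ->
  \sum_(t : Om) (#|S t :\: Us T| == 1%N)%:R = (2 ^ #|Xs T|)%:R * (Gc T)%:R :> R.
Proof.
move=> sT.
transitivity (\sum_(t : Om) ((T \subset S (phi s0 T t)) && (#|S (phi s0 T t)| == #|T|.+1))%:R : R).
  apply: eq_bigr => t _; rewrite sinks_phi // finset.subsetUl /= -(sinks_phi t sT).
  by rewrite card_sinks_phi // -[#|T|.+1]addn1 eqn_add2l.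
rewrite (sum_phi s0 T (fun s => ((T \subset S s) && (#|S s| == #|T|.+1))%:R)) /Gc -sumr_ind.
congr (_ * _); rewrite big_mkcond; apply: eq_bigr => s' _; rewrite agree_sub //.
by case: (T \subset S s').
Qed.

Local Notation K := (step_kernel R src tgt).

Lemma sum_ind_eq (a : Om) (b : bool) : \sum_(s : Om) ((s == a) && b)%:R = b%:R :> R.
Proof.
by rewrite (bigD1 a) //= eqxx big1 ?addr0 // => s /negbTE ->.
Qed.

Lemma K_sf (s t : Om) : S s = finset.set0 -> K s t = (s == t)%:R.
Proof.
move=> Ss; rewrite /step_kernel resampledE Ss.
have -> : Xs finset.set0 = finset.set0.
  by apply/setP => i; rewrite finset.in_set0; apply/negbTE/negP => /XsP [v]; rewrite finset.in_set0.
rewrite cards0 expr0 invr1.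
have -> : [forall i, (i \notin (finset.set0 : {set E})) ==> (t i == s i)] = (s == t).
  apply/forallP/eqP => [H|->]; last by move=> i; rewrite eqxx implybT.
  by apply/ffunP => i; have := H i; rewrite finset.in_set0 /= => /eqP.
by case: (s == t).
Qed.

Lemma K_class (s0 t : Om) :
  \sum_(s : Om | S s == S s0) K s t =
  (2 ^+ #|Xs (S s0)|)^-1 * (S (phi s0 (S s0) t) == S s0)%:R.
Proof.
set T := S s0; set c := (2 ^+ #|Xs T|)^-1 : R.
transitivity (\sum_(s : Om) ((s == phi s0 T t) && (S (phi s0 T t) == T))%:R * c).
  rewrite big_mkcond; apply: eq_bigr => s _.
  rewrite /step_kernel resampledE.
  case: (boolP (S s == T)) => [/eqP Hs|Hs].
    rewrite Hs -/c.
    have -> : [forall i, (i \notin Xs T) ==> (t i == s i)] = (s == phi s0 T t) && (S (phi s0 T t) == T).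
      apply/forallP/andP => [H|[/eqP -> _] i]; last first.
        by apply/implyP => iX; rewrite ffunE (negbTE iX).
      have es : s = phi s0 T t.
        apply/ffunP => i; rewrite ffunE; case: ifP => iX.
          by apply: (@forced T) => //; rewrite ?Hs ?subxx.
        by have /implyP := H i; rewrite iX => /(_ isT)/eqP.
      by rewrite -es Hs eqxx.
    by case: (_ && _); rewrite ?mul1r ?mul0r.
  rewrite mulr_natl; case: (boolP (s == phi s0 T t)) => [/eqP es|]; last by rewrite /=.
  by rewrite -es (negbTE Hs).
by rewrite -mulr_suml sum_ind_eq mulrC.
Qed.

Hypothesis sf : exists s0 : Om, S s0 = finset.set0.

Definition Gr (T : {set V}) : R := \sum_(v : V) (v \notin T)%:R * (cnt (v |: T))%:R.

Lemma sum_by_sinks (g : {set V} -> R) :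
  \sum_(t : Om) g (S t) = \sum_(T : {set V}) (cnt T)%:R * g T.
Proof.
transitivity (\sum_(t : Om) \sum_(T : {set V}) (S t == T)%:R * g T).
  apply: eq_bigr => t _; rewrite (bigD1 (S t)) //= eqxx mul1r big1 ?addr0 //.
  by move=> T /negbTE; rewrite eq_sym => ->; rewrite mul0r.
rewrite exchange_big /=; apply: eq_bigr => T _.
by rewrite -mulr_suml /cnt -sumr_ind.
Qed.

Lemma realizable (s : Om) (T : {set V}) : T \subset S s -> (0 < cnt T)%N.
Proof.
move=> sT; case: sf => s1 e1; apply/card_gt0P; exists (phi s T s1).
by rewrite inE sinks_phi // e1 finset.set0D finset.setU0.
Qed.

Lemma sum_E2 s0 (T : {set V}) : T \subset S s0 ->
  \sum_(t : Om) (#|S t :\: Us T| == 1%N)%:R = (2 ^ #|Xs T|)%:R * Gr T :> R.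
Proof.
move=> sT.
pose Q (s : Om) : R := \sum_(v : V) (v \notin T)%:R * (S s == v |: T)%:R.
transitivity (\sum_(t : Om) Q (phi s0 T t)).
  apply: eq_bigr => t _; rewrite /Q sinks_phi //.
  rewrite -sum_single; apply: eq_bigr => v _.
  case: (boolP (v \in T)) => vT /=.
    rewrite mul0r; case: eqP => // eB; exfalso.
    have : v \in S t :\: Us T by rewrite eB finset.in_set1.
    by rewrite finset.in_setD (fintype.subsetP (sub_Us T) v vT).
  rewrite mul1r; suff -> : (T :|: (S t :\: Us T) == v |: T) = (S t :\: Us T == [set v]) by [].
  apply/eqP/eqP => [e|->]; last by rewrite finset.setUC.
  apply/setP => w; rewrite finset.in_set1; apply/idP/eqP => [wB|->].
    have : w \in T :|: (S t :\: Us T) by rewrite finset.in_setU wB orbT.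
    rewrite e finset.in_setU1 => /orP [/eqP //|wT].
    move: wB; rewrite finset.in_setD (fintype.subsetP (sub_Us T) w wT) //.
  have : v \in v |: T by rewrite finset.setU11.
  rewrite -e finset.in_setU (negbTE vT) //.
rewrite (sum_phi s0 T Q) /Gr; congr (_ * _).
rewrite big_mkcond /=.
transitivity (\sum_(s' : Om) Q s').
  apply: eq_bigr => s' _; rewrite agree_sub //; case: ifP => // nT.
  rewrite /Q big1 // => v _; case: eqP; rewrite ?mulr0 // => e.
  by rewrite e finset.subsetUr in nT.
rewrite /Q exchange_big /=; apply: eq_bigr => v _; rewrite -mulr_sumr /cnt -sumr_ind.
by [].
Qed.

Lemma sum_H (U : {set V}) :
  \sum_(t : Om) ((S t \subset U) && (S t != finset.set0))%:R * (Gr (S t) / (cnt (S t))%:R) =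
  \sum_(t : Om) ((S t \subset U)%:R * #|S t|%:R + (#|S t :\: U| == 1%N)%:R - (#|S t| == 1%N)%:R).
Proof.
rewrite (sum_by_sinks (fun T => ((T \subset U) && (T != finset.set0))%:R * (Gr T / (cnt T)%:R))).
transitivity (\sum_(T : {set V}) ((T \subset U) && (T != finset.set0))%:R * Gr T).
  apply: eq_bigr => T _; case: (boolP (cnt T == 0%N)) => [/eqP c0|c0].
    have -> : Gr T = 0.
      rewrite /Gr big1 // => v _; case: (posnP (cnt (v |: T))) => [->|pos]; first by rewrite mulr0.
      exfalso; case/card_gt0P: pos => s; rewrite inE => /eqP es.
      have := @realizable s T; rewrite es finset.subsetUr => /(_ isT).
      by rewrite c0.
    by rewrite c0 !mul0r mulr0.
  by rewrite mulrCA; congr (_ * _); rewrite mulrC divfK // pnatr_eq0.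
under eq_bigr => T _ do rewrite /Gr mulr_sumr.
under eq_bigr => T _ do under eq_bigr => v _ do rewrite /cnt -sumr_ind !mulr_sumr.
rewrite exchange_big /=.
under eq_bigr => v _ do rewrite exchange_big /=.
rewrite exchange_big /=; apply: eq_bigr => t _.
rewrite -count_v; apply: eq_bigr => v _.
set A := S t.
rewrite (bigD1 (A :\ v)) //= big1 ?addr0.
  rewrite finset.setD11 /= mul1r.
  case: (boolP (v \in A)) => vA /=.
    by rewrite finset.setD1K // eqxx mulr1.
  have -> : (A == v |: (A :\ v)) = false.
    by apply/negbTE/negP => /eqP e; move: vA; rewrite e finset.setU11.
  by rewrite !mulr0.
move=> T nT; case: (boolP (v \in T)) => vT; first by rewrite mul0r mulr0.
rewrite [X in _ * (_ * X)](_ : _ = 0) ?mulr0 //.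
case: eqP => // e.
by move: nT; rewrite e finset.setU1K // eqxx.
Qed.

Definition kap : R := (Zsink src tgt 1)%:R / (Zsink src tgt 0)%:R.

Definition Fpot (s : Om) : R :=
  if S s == finset.set0 then 0 else #|S s|%:R + kap - Gr (S s) / (cnt (S s))%:R.

Lemma Z0E : (Zsink src tgt 0)%:R = \sum_(t : Om) (S t == finset.set0)%:R :> R.
Proof. by rewrite sumr_ind /Zsink; congr (_%:R); apply: eq_card => t; rewrite !inE cards_eq0. Qed.

Lemma Z1E : (Zsink src tgt 1)%:R = \sum_(t : Om) (#|S t| == 1%N)%:R :> R.
Proof. by rewrite sumr_ind. Qed.

Lemma Z0_neq0 : (Zsink src tgt 0)%:R != 0 :> R.
Proof.
rewrite pnatr_eq0 -lt0n; case: sf => s1 e1; apply/card_gt0P; exists s1.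
by rewrite inE e1 cards0.
Qed.

Lemma kapE : kap * (Zsink src tgt 0)%:R = (Zsink src tgt 1)%:R.
Proof. by rewrite /kap divfK // Z0_neq0. Qed.

Lemma sum_b (U : {set V}) :
  \sum_(t : Om) (S t \subset U)%:R * Fpot t =
  kap * \sum_(t : Om) (S t \subset U)%:R - \sum_(t : Om) (#|S t :\: U| == 1%N)%:R.
Proof.
transitivity (\sum_(t : Om) (((S t \subset U)%:R * #|S t|%:R + kap * (S t \subset U)%:R
    - kap * (S t == finset.set0)%:R) -
   ((S t \subset U) && (S t != finset.set0))%:R * (Gr (S t) / (cnt (S t))%:R))).
  apply: eq_bigr => t _; rewrite /Fpot.
  case: (boolP (S t == finset.set0)) => [/eqP ->|nt] /=.
    by rewrite finset.sub0set cards0 /=; ring.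
  by rewrite andbT /=; ring.
rewrite sumrB sum_H !big_split /= !sumrN -!mulr_sumr -Z0E -Z1E.
rewrite -kapE; ring.
Qed.

Lemma class_zero (s0 : Om) : S s0 != finset.set0 ->
  \sum_(s : Om | S s == S s0) (Fpot s - #|S s|%:R - \sum_(t : Om) K s t * Fpot t) = 0.
Proof.
move=> ne; set T := S s0.
have sT : T \subset S s0 by rewrite subxx.
have cT : (cnt T)%:R != 0 :> R.
  by rewrite pnatr_eq0 -lt0n (@realizable s0).
rewrite sumrB exchange_big /=.
have -> : \sum_(t : Om) \sum_(s : Om | S s == T) K s t * Fpot t =
   (2 ^+ #|Xs T|)^-1 * \sum_(t : Om) (S t \subset Us T)%:R * Fpot t.
  rewrite mulr_sumr; apply: eq_bigr => t _; rewrite -mulr_suml K_class -/T.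
  by rewrite sinks_phi_eq // mulrA mulrC.
rewrite sum_b (sum_C sT) (sum_E2 sT).
have -> : \sum_(s : Om | S s == T) (Fpot s - #|S s|%:R) = (cnt T)%:R * (kap - Gr T / (cnt T)%:R).
  transitivity (\sum_(s : Om | S s == T) (kap - Gr T / (cnt T)%:R)).
    apply: eq_bigr => s /eqP es; rewrite /Fpot es (negbTE ne); ring.
  set x := kap - _; rewrite big_mkcond /= /cnt -sumr_ind mulr_suml; apply: eq_bigr => s _.
  by case: (S s == T); rewrite ?mul1r ?mul0r.
have p2 : (2 ^+ #|Xs T|)^-1 * (2 ^ #|Xs T|)%:R = 1 :> R.
  by rewrite natrX mulVf // expf_neq0 // pnatr_eq0.
set p := (2 ^+ #|Xs T|)^-1 : R; set P := (2 ^ #|Xs T|)%:R : R.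
have -> : p * (kap * (P * (cnt T)%:R) - P * Gr T) = kap * (cnt T)%:R * (p * P) - Gr T * (p * P).
  by ring.
rewrite p2; field; exact: cT.
Qed.

Local Notation dist := (Defs.dist R src tgt).

Lemma dist_succ n t : dist n.+1 t = \sum_(s : Om) dist n s * K s t.
Proof. by rewrite /= ffunE. Qed.

Lemma GL (d : Om -> R) :
  (forall s s', S s = S s' -> S s != finset.set0 -> d s = d s') ->
  forall Y : Om -> R,
  (forall s0, S s0 != finset.set0 -> \sum_(s : Om | S s == S s0) Y s = 0) ->
  \sum_(s : Om | S s != finset.set0) d s * Y s = 0.
Proof.
move=> Hd Y HY.
rewrite (partition_big S xpredT) //=; apply: big1 => T _.
case: (pickP (fun s => (S s != finset.set0) && (S s == T))) => [s0 /andP[n0 /eqP e0]|none].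
  rewrite (eq_bigr (fun s => d s0 * Y s)) => [|s /andP[ns /eqP es]]; last first.
    by rewrite (Hd s s0) // es e0.
  rewrite -mulr_sumr.
  suff -> : \sum_(s | (S s != finset.set0) && (S s == T)) Y s = \sum_(s | S s == S s0) Y s.
    by rewrite HY ?mulr0.
  apply: eq_bigl => s; rewrite e0.
  by case: (boolP (S s == T)) => [/eqP ->|]; rewrite ?andbF // -e0 n0.
by rewrite big_pred0.
Qed.

Lemma dist_const n (s s' : Om) : S s = S s' -> S s != finset.set0 -> dist n s = dist n s'.
Proof.
elim: n s s' => [|n IH] s s' e ne; first by rewrite /= !ffunE.
rewrite !dist_succ; apply/eqP; rewrite -subr_eq0 -sumrB.
rewrite (bigID (fun u => S u != finset.set0)) /=.
rewrite [X in _ + X]big1 ?addr0; last first.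
  move=> u; rewrite negbK => /eqP eu; rewrite !K_sf //.
  have -> : (u == s) = false by apply/negbTE/negP => /eqP eus; move: ne; rewrite -eus eu eqxx.
  have -> : (u == s') = false by apply/negbTE/negP => /eqP eus; move: ne; rewrite e -eus eu eqxx.
  by rewrite mulr0 subrr.
under eq_bigr => u _ do rewrite -mulrBr.
apply/eqP; apply: (GL (IH)) => u0 nu0.
rewrite sumrB !K_class !sinks_phi ?subxx // e subrr.
by [].
Qed.

Lemma tele n :
  \sum_(s : Om) dist n s * Fpot s - \sum_(s : Om) dist n.+1 s * Fpot s =
  expected_resampled_sinks R src tgt n.
Proof.
rewrite /expected_resampled_sinks.
have -> : \sum_(t : Om) dist n.+1 t * Fpot t = \sum_(s : Om) dist n s * \sum_(t : Om) K s t * Fpot t.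
  under eq_bigr => t _ do rewrite dist_succ mulr_suml.
  rewrite exchange_big /=; apply: eq_bigr => s _; rewrite mulr_sumr.
  by apply: eq_bigr => t _; rewrite mulrA.
apply/eqP; rewrite -subr_eq0 -!sumrB; apply/eqP.
under eq_bigr => s _ do rewrite -!mulrBr.
rewrite (bigID (fun u => S u != finset.set0)) /=.
rewrite [X in _ + X]big1 ?addr0; last first.
  move=> u; rewrite negbK => /eqP eu.
  rewrite (eq_bigr (fun t => (u == t)%:R * Fpot t)); last by move=> t _; rewrite K_sf.
  rewrite (bigD1 u) //= eqxx mul1r big1 ?addr0; last first.
    by move=> t /negbTE; rewrite eq_sym => ->; rewrite mul0r.
  by rewrite /Fpot eu eqxx cards0 !subrr mulr0.
apply: (GL (dist_const n)) => u0 nu0.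
rewrite -[RHS](class_zero nu0); apply: eq_bigr => s _; ring.
Qed.

Lemma K_ge0 s t : 0 <= K s t.
Proof. by rewrite /step_kernel; case: ifP => // _; rewrite invr_ge0 exprn_ge0. Qed.

Lemma dist_ge0 n s : 0 <= dist n s.
Proof.
elim: n s => [|n IH] s; first by rewrite /= ffunE invr_ge0 exprn_ge0.
by rewrite dist_succ; apply: sumr_ge0 => u _; rewrite mulr_ge0 ?K_ge0.
Qed.

Lemma sumK s : \sum_(t : Om) K s t = 1.
Proof.
set X := resampled src tgt s.
transitivity (\sum_(t : Om) [forall i, (i \notin X) ==> (t i == s i)]%:R * (2 ^+ #|X|)^-1 : R).
  by apply: eq_bigr => t _; rewrite /step_kernel -/X; case: ifP; rewrite ?mul1r ?mul0r.
rewrite -mulr_suml sumr_ind card_agree natrX mulfV //.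
Qed.

Lemma card_Om : #|{: Om}| = (2 ^ #|E|)%N.
Proof. by rewrite card_ffun card_bool. Qed.

Lemma sum_const_Om (x : R) : \sum_(s : Om) x = (2 ^ #|E|)%:R * x.
Proof. by rewrite sumr_const card_Om mulr_natl. Qed.

Lemma sum_dist n : \sum_(s : Om) dist n s = 1.
Proof.
elim: n => [|n IH].
  under eq_bigr => s _ do rewrite /= ffunE.
  by rewrite sum_const_Om natrX mulfV // expf_neq0 // pnatr_eq0.
under eq_bigr => t _ do rewrite dist_succ.
rewrite exchange_big /= -[RHS]IH; apply: eq_bigr => s _.
by rewrite -mulr_sumr sumK mulr1.
Qed.

Lemma a0E : \sum_(s : Om) dist 0 s * Fpot s = kap.
Proof.
under eq_bigr => s _ do rewrite /= ffunE.
rewrite -mulr_sumr.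
have := sum_b [set: V].
under eq_bigr => t _ do rewrite finset.subsetT mul1r.
move=> ->.
under eq_bigr => t _ do rewrite finset.subsetT.
under [X in _ - X]eq_bigr => t _ do rewrite finset.setDT cards0.
rewrite [X in _ - X]big1 // subr0 sum_const_Om mulr1 mulrCA natrX mulVf ?mulr1 //.
Qed.

Definition Mb : R := \sum_(s : Om) `|Fpot s|.

Lemma Mb_ge0 : 0 <= Mb.
Proof. by apply: sumr_ge0 => s _; rewrite normr_ge0. Qed.

Lemma F_bound s : `|Fpot s| <= Mb * #|S s|%:R.
Proof.
case: (boolP (S s == finset.set0)) => [e|ne].
  by rewrite /Fpot e normr0 mulr_ge0 ?Mb_ge0.
apply: (@le_trans _ _ Mb).
  rewrite /Mb (bigD1 s) //= lerDl; apply: sumr_ge0 => t _; exact: normr_ge0.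
rewrite -{1}[Mb]mulr1 ler_wpM2l ?Mb_ge0 // ler1n lt0n cards_eq0 //.
Qed.

Lemma a_bound n :
  `|\sum_(s : Om) dist n s * Fpot s| <= Mb * expected_resampled_sinks R src tgt n.
Proof.
apply: (le_trans (ler_norm_sum _ _ _)).
rewrite /expected_resampled_sinks mulr_sumr; apply: ler_sum => s _.
rewrite normrM (ger0_norm (dist_ge0 n s)) mulrCA.
by rewrite ler_wpM2l ?dist_ge0 // F_bound.
Qed.

Lemma u_ge0 n : 0 <= expected_resampled_sinks R src tgt n.
Proof. by apply: sumr_ge0 => s _; rewrite mulr_ge0 ?dist_ge0. Qed.

Lemma u_bound n : expected_resampled_sinks R src tgt n <= #|V|%:R.
Proof.
apply: (@le_trans _ _ (\sum_(s : Om) dist n s * #|V|%:R)); last first.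
  by rewrite -mulr_suml sum_dist mul1r.
apply: ler_sum => s _.
by rewrite ler_wpM2l ?dist_ge0 // ler_nat max_card.
Qed.

End Comb.

Local Open Scope classical_set_scope.

Theorem theorem16 (R : realType) (V E : finType) (src tgt : E -> V)
  (loopless : forall i : E, src i != tgt i)
  (sink_free_exists : exists s : {ffun E -> bool}, sinks src tgt s = finset.set0) :
  series (expected_resampled_sinks R src tgt) @ \oo -->
    ((Zsink src tgt 1)%:R / (Zsink src tgt 0)%:R : R).
Proof.
have noiso : forall w : V, exists i : E, incident src tgt w i.
  move=> w; case: (pickP (incident src tgt w)) => [i wi|none]; first by exists i.
  exfalso; case: sink_free_exists => s1 e1.
  have : w \in sinks src tgt s1 by apply/sinkP => // i; rewrite none.
  by rewrite e1 finset.in_set0.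
set u := expected_resampled_sinks R src tgt.
set a := fun N => \sum_(s : {ffun E -> bool}) Defs.dist R src tgt N s * Fpot R src tgt s.
have ser N : series u N = kap R src tgt - a N.
  elim: N => [|N IH].
    by rewrite /series /= big_geq // /a a0E // subrr.
  rewrite seriesSr IH /u -(tele R loopless noiso sink_free_exists N) -/(a N) -/(a N.+1).
  by rewrite /a; ring.
have cvg_ser : cvgn (series u).
  apply: nondecreasing_is_cvgn.
    by apply: (@nondecreasing_series _ u xpredT 0%N) => n _ _; apply: u_ge0.
  exists (kap R src tgt + Mb R src tgt * #|V|%:R) => _ [n _ <-].
  rewrite ser lerD2l.
  have h : - a n <= `|a n| by rewrite ler_normr lexx orbT.
  apply: (le_trans h); apply: (le_trans (a_bound R src tgt n)).
  by apply: ler_wpM2l; [exact: Mb_ge0 | exact: u_bound].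
have u0 := cvg_series_cvg_0 cvg_ser.
have hu : (fun n => Mb R src tgt * u n) @ \oo --> (Mb R src tgt * 0).
  exact: cvgM (cvg_cst _) u0.
rewrite mulr0 in hu.
have hl : (fun n => - (Mb R src tgt * u n)) @ \oo --> (- 0 : R) by exact: cvgN hu.
rewrite oppr0 in hl.
have ha : a @ \oo --> (0 : R).
  apply: (squeeze_cvgr _ hl hu); apply: nearW => n.
  by rewrite -ler_norml; apply: a_bound.
have -> : series u = (fun N => kap R src tgt - a N) by apply/funext => N; rewrite ser.
have := cvgB (cvg_cst (kap R src tgt)) ha; rewrite subr0.
by move=> /(_ _ _); apply; exact: eventually_filter.
Qed.
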